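(* Let $\mathcal{M}=\{\mathcal{M}_o\}$ be a noisy $n$-qudit instrument that is applied every time a computational-basis measurement is performed. Assume all Weyl gates are implemented ideally. Run the following routine with initial state $\rho$ and sequence length $m\ge 1$: - Set $\alpha_0=0$. - For $i=1,\dots,m$: choose $\alpha_i,\beta_i\in\mathbb{Z}_d^n$ uniformly and independently at random; apply the gate $Z^{\beta_i}X^{\alpha_{i-1}-\alpha_i}$; measure with $\mathcal{M}$, obtaining outcome $o_i$; set $k_i=\alpha_i+o_i$. - Return $\vec k=(k_1,\dots,k_m)$. Then for every $\vec k\in(\mathbb{Z}_d^n)^m$, the probability that the routine returns $\vec k$ is $$\Pr(\vec k)=\operatorname{tr}\big(\hat{\mathcal{M}}_{k_m}\circ\cdots\circ\hat{\mathcal{M}}_{k_1}(\rho)\big),$$ where $\hat{\mathcal{M}}$ is the randomly compiled version of $\mathcal{M}$.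
   Context: Let $d,n$ be positive integers, with arithmetic on $\mathbb{Z}_d^n$ modulo $d$. Let $X^x=\sum_j|j+x\rangle\langle j|$ and $Z^z=\sum_j e^{2\pi i z\cdot j/d}|j\rangle\langle j|$. For an operator $A$, $\mathcal{A}(\rho)=A\rho A^\dagger$. An instrument $\{\mathcal{M}_o\}_{o\in\mathbb{Z}_d^n}$ is a family of completely positive trace-non-increasing maps summing to a trace-preserving map. Measuring a state $\sigma$ with it yields outcome $o$ with probability $\operatorname{tr}\mathcal{M}_o(\sigma)$ and post-measurement state $\mathcal{M}_o(\sigma)/\operatorname{tr}\mathcal{M}_o(\sigma)$. The randomly compiled version of $\mathcal{M}$ is $$\hat{\mathcal{M}}_k=d^{-3n}\sum_{a,b,x}\mathcal{X}^{x}\circ\mathcal{Z}^{a}\circ\mathcal{M}_{k-x}\circ\mathcal{Z}^{b}\circ\mathcal{X}^{-x}.$$ *)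

(* Defs.v *)
From HB Require Import structures.
From mathcomp Require Import all_boot all_order all_algebra.
From mathcomp Require Import algC.
Set Implicit Arguments.
Unset Strict Implicit.
Unset Printing Implicit Defensive.
Import Order.TTheory GRing.Theory Num.Theory.
Local Open Scope ring_scope.

(* Z_d for d > 0 : 'I_(d.-1).+1, whose zmodType arithmetic is mod (d.-1).+1 = d. *)
Notation Zd d := 'I_(d.-1).+1.
Notation Zdn d n := 'rV[Zd d]_n.
Notation dimH d n := #|{: Zdn d n}|.
(* Operators on the Hilbert space; basis index j is enum_rank j. *)
Notation Op d n := 'M[algC]_(dimH d n).

(* omega = e^{2 pi i/d}: d.-root (-1) is the d-th root of -1 of minimal
   non-negative argument, i.e. e^{i pi/d} (and -1 when d = 1). *)
Definition omega (d : nat) : algC := (d.-root (-1)) ^+ 2.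

(* dot product z.j (as a natural number; only its class mod d matters) *)
Definition dotZ d n (z j : Zdn d n) : nat := (\sum_(i < n) (z ord0 i : nat) * (j ord0 i : nat))%N.

Definition Xop d n (x : Zdn d n) : Op d n :=
  \matrix_(r, c) (enum_val r == enum_val c + x)%:R.

Definition Zop d n (z : Zdn d n) : Op d n :=
  \matrix_(r, c) ((r == c)%:R * omega d ^+ dotZ z (enum_val c)).

Definition adj (p q : nat) (A : 'M[algC]_(p, q)) : 'M[algC]_(q, p) :=
  (map_mx Num.conj_op A)^T.

Definition conjop (N : nat) (A : 'M[algC]_N) (rho : 'M[algC]_N) : 'M[algC]_N :=
  A *m rho *m adj A.

Definition psd (N : nat) (A : 'M[algC]_N) : Prop :=
  forall v : 'cV[algC]_N, 0 <= (adj v *m A *m v) 0 0.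

Definition density (N : nat) (rho : 'M[algC]_N) : Prop :=
  psd rho /\ \tr rho = 1.

Definition block_psd (N k : nat) (B : 'I_k -> 'I_k -> 'M[algC]_N) : Prop :=
  forall v : 'I_k -> 'cV[algC]_N,
    0 <= \sum_(a < k) \sum_(b < k) (adj (v a) *m B a b *m v b) 0 0.

Definition linear_map (N : nat) (Phi : 'M[algC]_N -> 'M[algC]_N) : Prop :=
  forall (c : algC) (A B : 'M[algC]_N), Phi (c *: A + B) = c *: Phi A + Phi B.

(* completely positive: linear and id_k (x) Phi maps psd to psd for all k
   (id_k (x) Phi acts blockwise on k x k block matrices) *)
Definition completely_positive (N : nat) (Phi : 'M[algC]_N -> 'M[algC]_N) : Prop :=
  linear_map Phi /\
  forall (k : nat) (B : 'I_k -> 'I_k -> 'M[algC]_N),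
    block_psd B -> block_psd (fun a b => Phi (B a b)).

Definition trace_nonincreasing (N : nat) (Phi : 'M[algC]_N -> 'M[algC]_N) : Prop :=
  forall rho, psd rho -> \tr (Phi rho) <= \tr rho.

Definition instrument (T : finType) (N : nat) (M : T -> 'M[algC]_N -> 'M[algC]_N) : Prop :=
  (forall o, completely_positive (M o) /\ trace_nonincreasing (M o)) /\
  (forall rho, \tr (\sum_(o : T) M o rho) = \tr rho).

Definition hatM d n (M : Zdn d n -> Op d n -> Op d n) (k : Zdn d n) (rho : Op d n)
  : Op d n :=
  ((d ^ (3 * n))%:R)^-1 *:
  \sum_(a : Zdn d n) \sum_(b : Zdn d n) \sum_(x : Zdn d n)
     conjop (Xop x) (conjop (Zop a) (M (k - x) (conjop (Zop b) (conjop (Xop (- x)) rho)))).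

(* Probability that the routine, started in state sigma with previous
   alpha = aprev, returns the sequence ks. One step: alpha, beta uniform
   on Z_d^n, apply Z^beta X^(aprev - alpha), measure with M: outcome o with
   probability p_o = tr M_o(sigma'), post-measurement state M_o(sigma')/p_o,
   record k = alpha + o. *)
Fixpoint routine_prob d n (M : Zdn d n -> Op d n -> Op d n)
    (sigma : Op d n) (aprev : Zdn d n) (ks : seq (Zdn d n)) : algC :=
  match ks with
  | [::] => 1
  | k :: ks' =>
    \sum_(a : Zdn d n) \sum_(b : Zdn d n)
      ((d ^ (2 * n))%:R)^-1 *
      \sum_(o : Zdn d n | a + o == k)
        let sigma1 := conjop (Zop b *m Xop (aprev - a)) sigma in
        let p := \tr (M o sigma1) in
        p * routine_prob M (p^-1 *: M o sigma1) a ks'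
  end.

(* Main.v *)
Require Import Defs.
From mathcomp Require Import all_boot all_order all_algebra.
From mathcomp Require Import algC.
From mathcomp Require Import ring.
Import Order.TTheory GRing.Theory Num.Theory.
Local Open Scope ring_scope.

Module Aux.
Set Implicit Arguments.
Unset Strict Implicit.


Section Gen.
Variable N : nat.
Implicit Types A B X Y : 'M[algC]_N.

Lemma adjM p q r (A : 'M[algC]_(p,q)) (B : 'M[algC]_(q,r)) :
  adj (A *m B) = adj B *m adj A.
Proof. by rewrite /adj map_mxM trmx_mul. Qed.

Lemma adjK p q (A : 'M[algC]_(p,q)) : adj (adj A) = A.
Proof. by apply/matrixP => i j; rewrite !mxE conjCK. Qed.

Lemma adjD p q (A B : 'M[algC]_(p,q)) : adj (A + B) = adj A + adj B.
Proof. by apply/matrixP => i j; rewrite !mxE rmorphD. Qed.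

Lemma adjZ p q c (A : 'M[algC]_(p,q)) : adj (c *: A) = c^* *: adj A.
Proof. by apply/matrixP => i j; rewrite !mxE rmorphM. Qed.

Lemma adj1 : adj (1%:M : 'M[algC]_N) = 1%:M.
Proof. by rewrite /adj map_mx1 trmx1. Qed.

Lemma conjopD A X Y : conjop A (X + Y) = conjop A X + conjop A Y.
Proof. by rewrite /conjop mulmxDr mulmxDl. Qed.

Lemma conjopZ A c X : conjop A (c *: X) = c *: conjop A X.
Proof. by rewrite /conjop -scalemxAr -scalemxAl. Qed.

Lemma conjop_sum A (I : finType) (F : I -> 'M[algC]_N) :
  conjop A (\sum_i F i) = \sum_i conjop A (F i).
Proof. by rewrite /conjop mulmx_sumr mulmx_suml. Qed.

Lemma conjopM A B X : conjop A (conjop B X) = conjop (A *m B) X.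
Proof. by rewrite /conjop adjM !mulmxA. Qed.

Lemma conjop1 X : conjop 1%:M X = X.
Proof. by rewrite /conjop adj1 mulmx1 mul1mx. Qed.

Lemma conjop_scal c A X : c * c^* = 1 -> conjop (c *: A) X = conjop A X.
Proof.
move=> hc; rewrite /conjop adjZ -!scalemxAl -scalemxAr scalerA hc.
by rewrite scale1r.
Qed.

Lemma tr_conjop A X : adj A *m A = 1%:M -> \tr (conjop A X) = \tr X.
Proof. by move=> h; rewrite /conjop mxtrace_mulC mulmxA h mul1mx. Qed.

Lemma lin0 (F : 'M[algC]_N -> 'M[algC]_N) : linear_map F -> F 0 = 0.
Proof.
move=> h; have := h 1 0 0; rewrite !scale1r addr0 => e.
by apply: (addrI (F 0)); rewrite addr0 -e.
Qed.

Lemma linD (F : 'M[algC]_N -> 'M[algC]_N) : linear_map F -> forall X Y, F (X + Y) = F X + F Y.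
Proof. by move=> h X Y; rewrite -{1}[X]scale1r h !scale1r. Qed.

Lemma linZ (F : 'M[algC]_N -> 'M[algC]_N) : linear_map F -> forall c X, F (c *: X) = c *: F X.
Proof. by move=> h c X; rewrite -[c *: X]addr0 h lin0 // addr0. Qed.

Lemma linS (F : 'M[algC]_N -> 'M[algC]_N) : linear_map F ->
  forall (I : finType) (G : I -> 'M[algC]_N), F (\sum_i G i) = \sum_i F (G i).
Proof. by move=> h I G; rewrite (big_morph F (linD h) (lin0 h)). Qed.

Lemma lin_conjop A : linear_map (conjop A).
Proof. by move=> c X Y; rewrite conjopD conjopZ. Qed.

Lemma lin_comp (F G : 'M[algC]_N -> 'M[algC]_N) :
  linear_map F -> linear_map G -> linear_map (fun X => F (G X)).
Proof. by move=> hF hG c X Y; rewrite hG hF. Qed.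

Lemma lin_sum (I : finType) (F : I -> 'M[algC]_N -> 'M[algC]_N) :
  (forall i, linear_map (F i)) -> linear_map (fun X => \sum_i F i X).
Proof.
move=> h c X Y; rewrite scaler_sumr -big_split; apply: eq_bigr => i _; exact: h.
Qed.

Lemma lin_scale (F : 'M[algC]_N -> 'M[algC]_N) s :
  linear_map F -> linear_map (fun X => s *: F X).
Proof. by move=> h c X Y; rewrite h scalerDr !scalerA mulrC. Qed.

Lemma trS (I : finType) (G : I -> 'M[algC]_N) : \tr (\sum_i G i) = \sum_i \tr (G i).
Proof. by apply: (big_morph _ (@mxtraceD _ _) (mxtrace0 _ _)). Qed.

Lemma psd_conjop A X : psd X -> psd (conjop A X).
Proof.
move=> h v; have := h (adj A *m v).
by rewrite /conjop adjM adjK !mulmxA.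
Qed.

Lemma psd_scale c X : 0 <= c -> psd X -> psd (c *: X).
Proof.
move=> hc h v; rewrite -scalemxAr -scalemxAl mxE; exact: mulr_ge0.
Qed.

Definition ev (i : 'I_N) : 'cV[algC]_N := delta_mx i 0.

Lemma adj_ev i : adj (ev i) = delta_mx 0 i.
Proof. by apply/matrixP => a b; rewrite /adj !mxE conjC_nat andbC. Qed.

Lemma Qe X p q : (adj (ev p) *m X *m ev q) 0 0 = X p q.
Proof. by rewrite adj_ev -rowE /ev -colE !mxE. Qed.

Lemma Qlin X (u w : 'cV[algC]_N) c :
  (adj (u + c *: w) *m X *m (u + c *: w)) 0 0 =
  (adj u *m X *m u) 0 0 + c * (adj u *m X *m w) 0 0 +
  c^* * (adj w *m X *m u) 0 0 + c^* * c * (adj w *m X *m w) 0 0.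
Proof.
rewrite adjD adjZ !mulmxDl !mulmxDr -!scalemxAl -!scalemxAr !mxE.
ring.
Qed.

Lemma psd_diag X i : psd X -> 0 <= X i i.
Proof. by move=> h; rewrite -Qe; apply: h. Qed.

Lemma psd_tr_ge0 X : psd X -> 0 <= \tr X.
Proof. by move=> h; rewrite /mxtrace; apply: sumr_ge0 => i _; apply: psd_diag. Qed.

Lemma psd_tr0 X : psd X -> \tr X = 0 -> X = 0.
Proof.
move=> h h0.
have hd : forall i, X i i = 0.
  move=> i; apply: (@psumr_eq0P _ _ predT (fun i => X i i)) => // j _.
  exact: psd_diag.
apply/matrixP => i j; rewrite mxE.
case: (eqVneq i j) => [->|nij]; first exact: hd.
have hq : forall c, 0 <= c * X i j + c^* * X j i.
  move=> c; have := h (ev i + c *: ev j); rewrite Qlin !Qe !hd.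
  by rewrite mulr0 addr0 add0r.
have hq' : forall c c', c' = c^* -> 0 <= c * X i j + c' * X j i.
  by move=> c c' ->; apply: hq.
have ci : ('i : algC)^* = - 'i by exact: conjCi.
have ci2 : (- 'i : algC)^* = 'i by rewrite -ci conjCK.
have c1 : (1 : algC)^* = 1 by exact: rmorph1.
have c2 : (-1 : algC)^* = -1 by rewrite rmorphN rmorph1.
have h1 := hq' _ _ (esym c1); have h2 := hq' _ _ (esym c2).
have h3 := hq' _ _ (esym ci); have h4 := hq' _ _ (esym ci2).
rewrite !mulN1r -opprD oppr_ge0 in h2.
rewrite !mul1r in h1.
have e1 : X i j + X j i = 0 by apply/eqP; rewrite eq_le h2 h1.
have h4' : 0 <= -('i * X i j + - 'i * X j i) by rewrite opprD -!mulNr opprK.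
rewrite oppr_ge0 in h4'.
have e2 : 'i * X i j + - 'i * X j i = 0 by apply/eqP; rewrite eq_le h4' h3.
have e3 : X j i = X i j.
  move: e2; rewrite mulNr => /eqP; rewrite subr_eq0 => /eqP e2.
  by symmetry; apply: (mulfI (neq0Ci algC)).
move: e1; rewrite e3 -mulr2n -mulr_natr => /eqP; rewrite mulf_eq0 pnatr_eq0 /=.
by rewrite orbF => /eqP.
Qed.

End Gen.


Section Weyl.
Variables (d n : nat).
Hypothesis hd : (0 < d)%N.
Local Notation T := (Zdn d n).
Local Notation N := (dimH d n).

Lemma sum_ev (y : T) (f : 'I_N -> algC) :
  \sum_t (enum_val t == y)%:R * f t = f (enum_rank y).
Proof.
rewrite (bigD1 (enum_rank y)) //= enum_rankK eqxx mul1r big1 ?addr0 // => t ht.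
have -> : (enum_val t == y) = false.
  apply/negbTE; apply: contra ht => /eqP <-; by rewrite enum_valK.
by rewrite mul0r.
Qed.

Lemma sum_diag (r : 'I_N) (f : 'I_N -> algC) :
  \sum_t (r == t)%:R * f t = f r.
Proof.
rewrite (bigD1 r) //= eqxx mul1r big1 ?addr0 // => t ht.
by rewrite eq_sym (negbTE ht) mul0r.
Qed.

Lemma sum_diag' (r : 'I_N) (f : 'I_N -> algC) :
  \sum_t (t == r)%:R * f t = f r.
Proof. by rewrite -(sum_diag r f); apply: eq_bigr => t _; rewrite eq_sym. Qed.

Lemma XM (u v : T) : Xop u *m Xop v = Xop (u + v).
Proof.
apply/matrixP => r s; rewrite !mxE.
under eq_bigr => t _ do rewrite !mxE mulrC.
rewrite sum_ev enum_rankK; congr (_ == _)%:R.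
by rewrite -addrA (addrC v).
Qed.

Lemma X0 : Xop (0 : T) = 1%:M.
Proof.
apply/matrixP => r s; rewrite !mxE addr0.
by rewrite (inj_eq enum_val_inj).
Qed.

Lemma adjX (u : T) : adj (Xop u) = Xop (- u).
Proof.
apply/matrixP => r s; rewrite /adj !mxE conjC_nat.
have -> // : (enum_val s == enum_val r + u) = (enum_val r == enum_val s + - u).
by apply/eqP/eqP => ->; [rewrite addrK | rewrite addrNK].
Qed.

Lemma XU (u : T) : adj (Xop u) *m Xop u = 1%:M.
Proof. by rewrite adjX XM addNr X0. Qed.

Lemma CXX (u v : T) (X : Op d n) :
  conjop (Xop u) (conjop (Xop v) X) = conjop (Xop (u + v)) X.
Proof. by rewrite conjopM XM. Qed.

Let D := (d.-1).+1.
Lemma dD : D = d. Proof. by rewrite /D prednK. Qed.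

Lemma omega_d : omega d ^+ D = 1.
Proof.
rewrite dD /omega exprAC rootCK //.
by rewrite expr2 mulN1r opprK.
Qed.

Lemma omega_norm : (omega d)^* * omega d = 1.
Proof.
rewrite -normCKC /omega normrX norm_rootC normrN1 rootC1 //.
by rewrite !expr1n.
Qed.

Lemma omegaX_norm k : (omega d ^+ k) * (omega d ^+ k)^* = 1.
Proof. by rewrite rmorphXn -exprMn mulrC omega_norm expr1n. Qed.

Lemma omega_mod i : omega d ^+ (i %% D) = omega d ^+ i.
Proof. exact: expr_mod omega_d. Qed.

Lemma dotZDl (a b j : T) :
  (dotZ (a + b) j = dotZ a j + dotZ b j %[mod D])%N.
Proof.
rewrite /dotZ -big_split /= -modn_summ -[in RHS]modn_summ.
congr (_ %% _)%N; apply: eq_bigr => i _.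
by rewrite !mxE /= modnMml mulnDl.
Qed.

Lemma dotZDr (a j k : T) :
  (dotZ a (j + k) = dotZ a j + dotZ a k %[mod D])%N.
Proof.
rewrite /dotZ -big_split /= -modn_summ -[in RHS]modn_summ.
congr (_ %% _)%N; apply: eq_bigr => i _.
by rewrite !mxE /= modnMmr mulnDr.
Qed.

Lemma omegaDl (a b j : T) :
  omega d ^+ dotZ (a + b) j = omega d ^+ dotZ a j * omega d ^+ dotZ b j.
Proof. by rewrite -exprD -omega_mod dotZDl omega_mod. Qed.

Lemma omegaDr (a j k : T) :
  omega d ^+ dotZ a (j + k) = omega d ^+ dotZ a j * omega d ^+ dotZ a k.
Proof. by rewrite -exprD -omega_mod dotZDr omega_mod. Qed.

Lemma ZmulL (z : T) (A : Op d n) r s :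
  (Zop z *m A) r s = omega d ^+ dotZ z (enum_val r) * A r s.
Proof.
rewrite mxE; under eq_bigr => t _ do rewrite mxE -mulrA.
by rewrite (sum_diag r (fun t => omega d ^+ dotZ z (enum_val t) * A t s)).
Qed.

Lemma ZmulR (z : T) (A : Op d n) r s :
  (A *m Zop z) r s = A r s * omega d ^+ dotZ z (enum_val s).
Proof.
rewrite mxE; under eq_bigr => t _ do rewrite mxE mulrCA.
by rewrite (sum_diag' s (fun t => A r t * omega d ^+ dotZ z (enum_val s))).
Qed.

Lemma ZU (z : T) : adj (Zop z) *m Zop z = 1%:M.
Proof.
apply/matrixP => r s; rewrite ZmulR /adj !mxE.
case: (eqVneq r s) => [->|ne].
  by rewrite mul1r mulrC; apply: omegaX_norm.
by rewrite mul0r rmorph0 mul0r.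
Qed.

Lemma K (a b w : T) (X : Op d n) :
  conjop (Zop b) (conjop (Xop w) (conjop (Zop a) X)) =
  conjop (Zop (b + a)) (conjop (Xop w) X).
Proof.
rewrite !conjopM.
have -> : Zop (b + a) *m Xop w =
  (omega d ^+ dotZ a w) *: (Zop b *m Xop w *m Zop a).
  apply/matrixP => r s; rewrite ZmulL [RHS]mxE ZmulR ZmulL !mxE.
  case: (eqVneq (enum_val r) (enum_val s + w)) => [e|ne]; last by rewrite !mulr0 mul0r mulr0.
  rewrite e (omegaDl b a) (omegaDr a (enum_val s) w).
  by rewrite !mulr1 [RHS]mulrC mulrA.
rewrite conjop_scal ?mulmxA //; exact: omegaX_norm.
Qed.

Lemma card_T : #|{: T}| = (d ^ n)%N.
Proof. by rewrite card_mx card_ord mul1n prednK. Qed.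

End Weyl.


Section Main.
Variables (d n : nat).
Hypothesis hd : (0 < d)%N.
Local Notation T := (Zdn d n).
Variable M : T -> Op d n -> Op d n.
Hypothesis hM : instrument M.

Lemma hMlin o : linear_map (M o).
Proof. exact: (hM.1 o).1.1. Qed.

Lemma hMpsd o X : psd X -> psd (M o X).
Proof.
move=> hX v.
have hb : block_psd (fun (_ _ : 'I_1) => X) by move=> w; rewrite !big_ord1; apply: hX.
by have := (hM.1 o).1.2 1%N _ hb (fun _ => v); rewrite !big_ord1.
Qed.

Lemma hat_lin k : linear_map (hatM M k).
Proof.
have h : forall a b x : T, linear_map (fun X =>
   conjop (Xop x) (conjop (Zop a) (M (k - x) (conjop (Zop b) (conjop (Xop (- x)) X))))).
  by move=> a b x c A B; rewrite !lin_conjop hMlin !lin_conjop.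
exact: (lin_scale _ (lin_sum (fun a => lin_sum (fun b => lin_sum (fun x => h a b x))))).
Qed.

Definition Fold (ks : seq T) (s : Op d n) := foldl (fun sigma kk => hatM M kk sigma) s ks.

Lemma Fold_lin ks : linear_map (Fold ks).
Proof.
elim: ks => [|k ks IH] c A B //=.
by rewrite /Fold /= hat_lin -!/(Fold _ _) IH.
Qed.

Definition L ks X := \tr (Fold ks X).

Lemma L_sum ks (I : finType) (F : I -> Op d n) : L ks (\sum_i F i) = \sum_i L ks (F i).
Proof. by rewrite /L (linS (Fold_lin ks)) trS. Qed.

Lemma L_scale ks c X : L ks (c *: X) = c * L ks X.
Proof. by rewrite /L (linZ (Fold_lin ks)) mxtraceZ. Qed.

Lemma hat_absorb k (y a : T) W :
  hatM M k (conjop (Xop y) (conjop (Zop a) W)) = hatM M k (conjop (Xop y) W).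
Proof.
rewrite /hatM; congr (_ *: _); apply: eq_bigr => a' _.
rewrite [RHS](reindex_inj (addIr a)); apply: eq_bigr => b _; apply: eq_bigr => x _.
by rewrite !CXX K.
Qed.

Lemma absorb ks (y a : T) W :
  L ks (conjop (Xop y) (conjop (Zop a) W)) = L ks (conjop (Xop y) W).
Proof.
case: ks => [|k ks].
  by rewrite /L /Fold /= !tr_conjop ?XU ?ZU.
by rewrite /L /Fold /= hat_absorb.
Qed.

Fixpoint G (s : Op d n) (x : T) (ks : seq T) : algC :=
  match ks with
  | [::] => \tr s
  | k :: ks' =>
    \sum_(a : T) \sum_(b : T)
      ((d ^ (2 * n))%:R)^-1 *
      \sum_(o : T | a + o == k) G (M o (conjop (Zop b *m Xop (x - a)) s)) a ks'
  end.

Lemma Ghom ks : forall s x c, G (c *: s) x ks = c * G s x ks.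
Proof.
elim: ks => [|k ks IH] s x c /=; first by rewrite mxtraceZ.
rewrite mulr_sumr; apply: eq_bigr => a _; rewrite mulr_sumr; apply: eq_bigr => b _.
rewrite mulrCA; congr (_ * _); rewrite mulr_sumr; apply: eq_bigr => o _.
by rewrite conjopZ (linZ (hMlin o)) IH.
Qed.

Lemma Pstep ks : forall Y a, psd Y ->
  \tr Y * routine_prob M ((\tr Y)^-1 *: Y) a ks = G Y a ks.
Proof.
elim: ks => [|k ks IH] Y a hY; first by rewrite /= mulr1.
have E : forall s, psd s -> routine_prob M s a (k :: ks) = G s a (k :: ks).
  move=> s hs /=; apply: eq_bigr => a' _; apply: eq_bigr => b _.
  congr (_ * _); apply: eq_bigr => o _.
  exact: IH (hMpsd o (psd_conjop _ hs)).
case: (eqVneq (\tr Y) 0) => [h0|hn].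
  have -> : Y = 0 := psd_tr0 hY h0.
  rewrite mxtrace0 mul0r.
  by have := Ghom (k :: ks) 0 a 0; rewrite scale0r mul0r => ->.
rewrite E ?Ghom ?mulrA ?divff ?mul1r //.
apply: psd_scale => //; rewrite invr_ge0; exact: psd_tr_ge0.
Qed.

Lemma sum_o (a k : T) (F : T -> algC) : \sum_(o : T | a + o == k) F o = F (k - a).
Proof. by apply: big_pred1 => o /=; rewrite [RHS]eq_sym subr_eq eq_sym addrC. Qed.

Lemma Inv ks : forall s x, G s x ks = L ks (conjop (Xop x) s).
Proof.
elim: ks => [|k ks IH] s x /=.
  by rewrite /L /Fold /= tr_conjop // XU.
transitivity (\sum_(a : T) \sum_(b : T) ((d ^ (2 * n))%:R)^-1 *
   L ks (conjop (Xop a) (M (k - a) (conjop (Zop b *m Xop (x - a)) s)))).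
  by apply: eq_bigr => a _; apply: eq_bigr => b _; rewrite sum_o IH.
have -> : L (k::ks) (conjop (Xop x) s) = L ks (hatM M k (conjop (Xop x) s)) by [].
transitivity (((d ^ (3 * n))%:R)^-1 * \sum_(a' : T) \sum_(b : T) \sum_(y : T)
   L ks (conjop (Xop y) (M (k - y) (conjop (Zop b *m Xop (x - y)) s)))); last first.
  rewrite /hatM L_scale L_sum; congr (_ * _); apply: eq_bigr => a' _.
  rewrite L_sum; apply: eq_bigr => b _; rewrite L_sum; apply: eq_bigr => y _.
  by rewrite absorb CXX conjopM (addrC (- y)).
have dn0 : (d ^ n)%:R != 0 :> algC by rewrite pnatr_eq0 -lt0n expn_gt0 hd.
have hs0 : ((d ^ (3 * n))%:R)^-1 * (d ^ n)%:R = ((d ^ (2 * n))%:R)^-1 :> algC.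
  by rewrite mulSn expnD natrM invfM mulrAC mulVf // mul1r.
have hs : ((d ^ (3 * n))%:R)^-1 *+ (d ^ n) = ((d ^ (2 * n))%:R)^-1 :> algC.
  by rewrite -hs0 mulr_natr.
rewrite sumr_const.
have -> : forall z : algC, z *+ #|T| = z *+ (d ^ n) by move=> z; rewrite card_T.
rewrite exchange_big /= mulrnAr -mulrnAl hs mulr_sumr.
apply: eq_bigr => b _; rewrite mulr_sumr; apply: eq_bigr => a _ //.
Qed.

End Main.


End Aux.
Import Aux.

Theorem lemma1 (d n : nat) (hd : (0 < d)%N) (hn : (0 < n)%N)
  (M : Zdn d n -> Op d n -> Op d n) (hM : instrument M)
  (rho : Op d n) (hrho : density rho)
  (m : nat) (hm : (0 < m)%N) (k : m.-tuple (Zdn d n)) :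
  routine_prob M rho 0 k = \tr (foldl (fun sigma kk => hatM M kk sigma) rho k).
Proof.
case: hrho => hp ht.
have := Pstep hM k 0 hp; rewrite ht invr1 scale1r mul1r => ->.
by rewrite (Inv hd hM) X0 conjop1.
Qed.
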